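(* Let $R$ be a commutative ring, $E$ a simple $R$-module, $D$ a finitely generated $R$-module and $M=E\oplus D$. The following are equivalent: (a) $E$ is strongly hollow in $M$; (b) every submodule $N$ of $M$ either contains $E$ or is contained in $D$; (c) $R=\mathrm{Ann}(E)+\mathrm{Ann}(D)$; (d) $\mathrm{Ann}(D)\not\subseteq\mathrm{Ann}(E)$.
   Context: A submodule $N$ of $M$ is strongly hollow in $M$ if for all submodules $K,L$ of $M$, $N\subseteq K+L$ implies $N\subseteq K$ or $N\subseteq L$. $\mathrm{Ann}(X)=\{r\in R\mid rX=0\}$. *)

(* Defs.v *)
From mathcomp Require Import all_boot all_algebra.
Set Implicit Arguments. Unset Strict Implicit. Unset Printing Implicit Defensive.
Import GRing.Theory.
Local Open Scope ring_scope.

Definition submodule (R : pzRingType) (V : lmodType R) (S : V -> Prop) : Prop :=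
  [/\ S 0, (forall x y, S x -> S y -> S (x + y)) &
      (forall (r : R) x, S x -> S (r *: x))].

Definition subset_of (T : Type) (A B : T -> Prop) : Prop := forall x, A x -> B x.

Definition sum_sub (R : pzRingType) (V : lmodType R) (K L : V -> Prop) : V -> Prop :=
  fun v => exists k l, [/\ K k, L l & v = k + l].

(* N is strongly hollow in M (M = the whole module V) *)
Definition strongly_hollow (R : pzRingType) (V : lmodType R) (N : V -> Prop) : Prop :=
  forall K L : V -> Prop, submodule K -> submodule L ->
    subset_of N (sum_sub K L) -> subset_of N K \/ subset_of N L.

Definition simple_module (R : pzRingType) (E : lmodType R) : Prop :=
  (exists x : E, x != 0) /\
  forall S : E -> Prop, submodule S ->
    (forall x, S x -> x = 0) \/ (forall x, S x).

Definition fin_gen (R : pzRingType) (D : lmodType R) : Prop :=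
  exists (n : nat) (g : 'I_n -> D),
    forall d : D, exists c : 'I_n -> R, d = \sum_(i < n) c i *: g i.

Definition Ann (R : pzRingType) (X : lmodType R) : R -> Prop :=
  fun r => forall x : X, r *: x = 0.

(* The copies of E and D inside M = E (+) D, realized as E * D *)
Definition inl_sub (R : pzRingType) (E D : lmodType R) : (E * D)%type -> Prop :=
  fun m => m.2 = 0.
Definition inr_sub (R : pzRingType) (E D : lmodType R) : (E * D)%type -> Prop :=
  fun m => m.1 = 0.

(* Main.v *)
Require Import Defs.
From Stdlib Require Import Classical.
From mathcomp Require Import all_boot all_algebra.
Set Implicit Arguments. Unset Strict Implicit. Unset Printing Implicit Defensive.
Import GRing.Theory.
Local Open Scope ring_scope.

Lemma cyc (R : pzRingType) (E : lmodType R) : simple_module E ->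
  forall e : E, e != 0 -> forall y, exists s, y = s *: e.
Proof.
move=> [_ HS] e He y.
have Hsub : submodule (fun y : E => exists s, y = s *: e).
  split.
  - by exists 0; rewrite scale0r.
  - by move=> x z [s ->] [u ->]; exists (s + u); rewrite scalerDl.
  - by move=> r x [s ->]; exists (r * s); rewrite scalerA.
case: (HS _ Hsub) => [H|H]; last exact: H.
have e0 : e = 0 by apply: H; exists 1; rewrite scale1r.
by rewrite e0 eqxx in He.
Qed.

Lemma full (R : pzRingType) (E : lmodType R) (S : E -> Prop) : simple_module E ->
  submodule S -> forall z, S z -> z != 0 -> forall x, S x.
Proof.
move=> [_ HS] HSub z Hz Hz0.
case: (HS S HSub) => [H|H] //.
by rewrite (H z Hz) eqxx in Hz0.
Qed.

Theorem lemma2p17 (R : comPzRingType) (E D : lmodType R) :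
  simple_module E -> fin_gen D ->
  let Ein := @inl_sub R E D in
  let Din := @inr_sub R E D in
  let a := strongly_hollow Ein in
  let b := forall N : (E * D)%type -> Prop, submodule N ->
             subset_of Ein N \/ subset_of N Din in
  let c := forall r : R, exists s t : R, [/\ Ann E s, Ann D t & r = s + t] in
  let d := ~ subset_of (Ann D) (Ann E) in
  [/\ a <-> b, b <-> c & c <-> d].
Proof.
move=> Hs Hfg; cbv zeta.
have [x0 Hx0] := Hs.1.
have ab : strongly_hollow (@inl_sub R E D) -> forall N : (E * D)%type -> Prop, submodule N ->
             subset_of (@inl_sub R E D) N \/ subset_of N (@inr_sub R E D).
  move=> Ha N HN.
  have HSm : submodule (fun e : E => exists dd, N (e, dd)).
    case: HN => H0 HD HZ; split.
    - by exists 0; apply: H0.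
    - by move=> x z [d1 H1] [d2 H2]; exists (d1 + d2); apply: (HD _ _ H1 H2).
    - by move=> r x [d1 H1]; exists (r *: d1); apply: (HZ r _ H1).
  case: (Hs.2 _ HSm) => [H|H].
    right; move=> [e f] Hm; rewrite /inr_sub /=; apply: H; by exists f.
  have HDin : submodule (@inr_sub R E D).
    split => //=.
    - move=> [x1 y1] [x2 y2]; rewrite /inr_sub /= => H1 H2.
      by change (x1 + x2 = 0); rewrite H1 H2 addr0.
    - move=> r [x1 y1]; rewrite /inr_sub /= => H1.
      by change (r *: x1 = 0); rewrite H1 scaler0.
  case: (Ha N _ HN HDin).
  - move=> [e f]; rewrite /inl_sub /= => ->.
    have [dd Hdd] := H e.
    exists (e, dd), (0, - dd); split => //.
    change ((e, 0) = (e + 0, dd + - dd)).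
    by rewrite addr0 subrr.
  - by left.
  - move=> HH; have := HH (x0, 0) erefl; rewrite /inr_sub /= => e0.
    by rewrite e0 eqxx in Hx0.
have ba : (forall N : (E * D)%type -> Prop, submodule N ->
             subset_of (@inl_sub R E D) N \/ subset_of N (@inr_sub R E D)) ->
          strongly_hollow (@inl_sub R E D).
  move=> Hb K L HK HL Hsub.
  case: (Hb K HK) => [|HKD]; first by left.
  case: (Hb L HL) => [|HLD]; first by right.
  exfalso.
  have [k [l [Hk Hl Heq]]] := Hsub (x0, 0) erefl.
  have := congr1 fst Heq.
  change (x0 = k.1 + l.1 -> False).
  rewrite (HKD _ Hk) (HLD _ Hl) addr0 => e0.
  by rewrite e0 eqxx in Hx0.
have bd : (forall N : (E * D)%type -> Prop, submodule N ->
             subset_of (@inl_sub R E D) N \/ subset_of N (@inr_sub R E D)) ->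
          ~ subset_of (Ann D) (Ann E).
  move=> Hb.
  have key : forall dd : D, exists r : R, r *: x0 = x0 /\ r *: dd = 0.
    move=> dd.
    have HN : submodule (fun m : (E * D)%type => exists r, m = r *: (x0, dd)).
      split.
      - by exists 0; rewrite scale0r.
      - by move=> x z [s ->] [u ->]; exists (s + u); rewrite scalerDl.
      - by move=> r x [s ->]; exists (r * s); rewrite scalerA.
    case: (Hb _ HN) => [H|H].
      have [r Hr] := H (x0, 0) erefl.
      exists r; split.
        have := congr1 fst Hr; change (x0 = r *: x0 -> r *: x0 = x0); by move=> <-.
      have := congr1 snd Hr; change (0 = r *: dd -> r *: dd = 0); by move=> <-.
    have := H (x0, dd) (ex_intro _ 1 (esym (scale1r _))).
    rewrite /inr_sub /= => e0; by rewrite e0 eqxx in Hx0.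
  have lst : forall s : seq D, exists r : R,
      r *: x0 = x0 /\ forall dd, dd \in s -> r *: dd = 0.
    elim => [|h s [r [Hr Hsr]]].
      by exists 1; split; [rewrite scale1r | move=> dd; rewrite in_nil].
    have [u [Hu Hh]] := key h.
    exists (u * r); split; first by rewrite -scalerA Hr Hu.
    move=> dd; rewrite in_cons => /orP [/eqP ->|Hin].
      by rewrite mulrC -scalerA Hh scaler0.
    by rewrite -scalerA (Hsr _ Hin) scaler0.
  have [n [g Hg]] := Hfg.
  have [r [Hx Hall]] := lst [seq g i | i <- enum 'I_n].
  move=> Hsub.
  have HrD : Ann D r.
    move=> dd; have [cc ->] := Hg dd.
    rewrite scaler_sumr; apply: big1 => i _.
    rewrite scalerA mulrC -scalerA Hall ?scaler0 //.
    by apply: map_f; rewrite mem_enum.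
  have := Hsub r HrD x0; rewrite Hx => e0.
  by rewrite e0 eqxx in Hx0.
have getT : ~ subset_of (Ann D) (Ann E) -> exists t (y : E), Ann D t /\ t *: y != 0.
  rewrite /subset_of => Hnd.
  have [t Ht] := not_all_ex_not _ _ Hnd.
  have [HtD HtE] := imply_to_and _ _ Ht.
  have [y Hy] := not_all_ex_not _ _ HtE.
  by exists t, y; split => //; apply/eqP.
have db : ~ subset_of (Ann D) (Ann E) ->
          (forall N : (E * D)%type -> Prop, submodule N ->
             subset_of (@inl_sub R E D) N \/ subset_of N (@inr_sub R E D)).
  move=> Hd N HN.
  case: (classic (subset_of N (@inr_sub R E D))) => [H|H]; first by right.
  left.
  have [m Hm] := not_all_ex_not _ _ H.
  have [HNm Hm1] := imply_to_and _ _ Hm.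
  have [t [y [HtD Hty]]] := getT Hd.
  have Hm1' : m.1 != 0 by apply/eqP.
  have [s Hys] := cyc Hs Hm1' y.
  have Htm : t *: m.1 != 0.
    apply: contraNneq Hty => H0.
    by rewrite Hys scalerA mulrC -scalerA H0 scaler0.
  case: HN => H0 HD HZ.
  have HS : submodule (fun e : E => N (e, 0)).
    split => //.
    - move=> x z H1 H2; have := HD _ _ H1 H2.
      by change (N (x + z, 0 + 0) -> N (x + z, 0)); rewrite addr0.
    - move=> r x H1; have := HZ r _ H1.
      by change (N (r *: x, r *: 0) -> N (r *: x, 0)); rewrite scaler0.
  have Hin : N (t *: m.1, 0).
    have := HZ t _ HNm; case: m {Hm H Hm1 Hm1' Hys Htm HNm} => e f /=.
    by change (N (t *: e, t *: f) -> N (t *: e, 0)); rewrite (HtD f).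
  have Hall := full Hs HS Hin Htm.
  by move=> [e f]; rewrite /inl_sub /= => ->; apply: Hall.
have cd : (forall r : R, exists s t : R, [/\ Ann E s, Ann D t & r = s + t]) ->
          ~ subset_of (Ann D) (Ann E).
  move=> Hc Hsub.
  have [s [t [HsE HtD E1]]] := Hc 1.
  have : x0 = 0 by rewrite -[x0]scale1r E1 scalerDl HsE (Hsub t HtD) addr0.
  by move=> e0; rewrite e0 eqxx in Hx0.
have dc : ~ subset_of (Ann D) (Ann E) ->
          (forall r : R, exists s t : R, [/\ Ann E s, Ann D t & r = s + t]).
  move=> Hd r.
  have [t [y [HtD Hty]]] := getT Hd.
  have [u Hu] := cyc Hs Hty y.
  have Hy : y != 0 by apply: contraNneq Hty => ->; rewrite scaler0.
  have HE : Ann E (1 - u * t).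
    move=> z; have [v ->] := cyc Hs Hy z.
    by rewrite scalerA mulrC -scalerA scalerBl scale1r -scalerA -Hu subrr scaler0.
  exists (r * (1 - u * t)), (r * u * t); split.
  - by move=> z; rewrite -scalerA HE scaler0.
  - by move=> z; rewrite -scalerA HtD scaler0.
  - by rewrite mulrBr mulr1 mulrA subrK.
split; split => //.
- by move=> Hb; apply: dc; apply: bd.
- by move=> Hc; apply: db; apply: cd.
Qed.
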